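(* Let $A=\{0,1,2\}$, let $T\colon A^4\to A$ be given by $T(1,1,2,2)=T(1,2,1,2)=1$ and $T(\mathbf{x})=0$ for all other $\mathbf{x}\in A^4$, and let $f\colon A^2\to A$ be given by $f(x,y)=1$ if $\{x,y\}=\{1,2\}$ and $f(x,y)=0$ otherwise. Then $f\in\{T\}^{**}$, and the graph of $f$ is primitive positively definable from the graph of $T$: \[\{(x_2,x_3,x_5)\in A^3: f(x_2,x_3)=x_5\}=\Bigl\{(x_2,x_3,x_5)\in A^3:\exists x_1,x_4\in A\colon T(x_1,x_2,x_3,x_4)=x_5\wedge T(x_2,x_3,x_2,x_3)=T(x_1,x_2,x_4,x_3)\wedge T(x_3,x_2,x_3,x_2)=T(x_1,x_3,x_4,x_2)\Bigr\},\] which also equals $\{(x_2,x_3,x_5)\in A^3:\exists x_1,x_4,u,v\in A\colon T(x_1,x_2,x_3,x_4)=x_5\wedge T(x_2,x_3,x_2,x_3)=u\wedge T(x_1,x_2,x_4,x_3)=u\wedge T(x_3,x_2,x_3,x_2)=v\wedge T(x_1,x_3,x_4,x_2)=v\}$.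
   Context: An $m$-ary $g$ commutes with an $n$-ary $h$ if $g\bigl((h((x_{ij})_{j}))_{i}\bigr)=h\bigl((g((x_{ij})_{i}))_{j}\bigr)$ for all $(x_{ij})\in A^{m\times n}$. For a set $F$ of finitary operations on $A$ (positive arity), $F^*$ is the set of all such operations commuting with every member of $F$, and $F^{**}=(F^* )^*$. *)

(* Defs.v *)
From mathcomp Require Import all_boot.
Set Implicit Arguments. Unset Strict Implicit. Unset Printing Implicit Defensive.

Definition operation (A : Type) (n : nat) := ('I_n -> A) -> A.

Definition fop (A : Type) := {n : nat & operation A n}.

Definition commutes (A : Type) (m n : nat) (g : operation A m) (h : operation A n) :=
  forall x : 'I_m -> 'I_n -> A,
    g (fun i => h (fun j => x i j)) = h (fun j => g (fun i => x i j)).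

Definition centralizer (A : Type) (F : fop A -> Prop) : fop A -> Prop :=
  fun p => 0 < projT1 p /\ forall q, F q -> commutes (projT2 p) (projT2 q).

Definition bicentralizer (A : Type) (F : fop A -> Prop) := centralizer (centralizer F).

Notation A3 := 'I_3.
Definition a0 : A3 := inord 0.
Definition a1 : A3 := inord 1.
Definition a2 : A3 := inord 2.

Definition tup2 (a b : A3) : 'I_2 -> A3 := fun i => nth a [:: a; b] i.
Definition tup4 (a b c d : A3) : 'I_4 -> A3 := fun i => nth a [:: a; b; c; d] i.

Definition T : operation A3 4 := fun x =>
  if ([&& x (inord 0) == a1, x (inord 1) == a1, x (inord 2) == a2 & x (inord 3) == a2]
      || [&& x (inord 0) == a1, x (inord 1) == a2, x (inord 2) == a1 & x (inord 3) == a2])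
  then a1 else a0.

Definition f : operation A3 2 := fun x =>
  if ((x (inord 0) == a1) && (x (inord 1) == a2)) || ((x (inord 0) == a2) && (x (inord 1) == a1))
  then a1 else a0.

(* Main.v *)
Require Import Defs.
From mathcomp Require Import all_boot.
From Stdlib Require Import FunctionalExtensionality.

Definition lst : seq A3 := [:: @Ordinal 3 0 erefl; @Ordinal 3 1 erefl; @Ordinal 3 2 erefl].

Lemma in_lst (x : A3) : x \in lst.
Proof.
case: x => [[|[|[|//]]] H]; rewrite /lst !inE.
- by rewrite (_ : Ordinal H = @Ordinal 3 0 erefl) ?eqxx //; apply/val_inj.
- by rewrite (_ : Ordinal H = @Ordinal 3 1 erefl) ?eqxx ?orbT //; apply/val_inj.
- by rewrite (_ : Ordinal H = @Ordinal 3 2 erefl) ?eqxx ?orbT //; apply/val_inj.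
Qed.

Lemma part2b :
  all (fun x2 : A3 => all (fun x3 : A3 => all (fun x5 : A3 =>
     (f (tup2 x2 x3) == x5) ==
     has (fun x1 : A3 => has (fun x4 : A3 =>
       [&& T (tup4 x1 x2 x3 x4) == x5,
           T (tup4 x2 x3 x2 x3) == T (tup4 x1 x2 x4 x3) &
           T (tup4 x3 x2 x3 x2) == T (tup4 x1 x3 x4 x2)]) lst) lst) lst) lst) lst.
Proof.
have E : forall n k (H : k < n.+1), (inord k : 'I_n.+1) = Ordinal H.
  by move=> n k H; apply/val_inj; rewrite /= inordK.
rewrite /T /f /a0 /a1 /a2.
rewrite !(E 2 0 erefl) !(E 2 1 erefl) !(E 2 2 erefl).
rewrite !(E 3 0 erefl) !(E 3 1 erefl) !(E 3 2 erefl) !(E 3 3 erefl) !(E 1 0 erefl) !(E 1 1 erefl).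
vm_compute. reflexivity. Qed.

Lemma part2 (x2 x3 x5 : A3) :
     f (tup2 x2 x3) = x5 <->
     exists x1 x4 : A3,
       [/\ T (tup4 x1 x2 x3 x4) = x5,
           T (tup4 x2 x3 x2 x3) = T (tup4 x1 x2 x4 x3) &
           T (tup4 x3 x2 x3 x2) = T (tup4 x1 x3 x4 x2)].
Proof.
have := part2b => /allP /(_ x2 (in_lst _)) /allP /(_ x3 (in_lst _)) /allP /(_ x5 (in_lst _)) /eqP H.
split.
  move/eqP; rewrite H => /hasP [x1 _ /hasP [x4 _ /and3P [/eqP h1 /eqP h2 /eqP h3]]].
  by exists x1, x4.
move=> [x1 [x4 [h1 h2 h3]]]; apply/eqP; rewrite H; apply/hasP; exists x1; first exact: in_lst.
apply/hasP; exists x4; first exact: in_lst. by rewrite h1 h2 h3 !eqxx.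
Qed.

Lemma fE (x : 'I_2 -> A3) : f x = f (tup2 (x (inord 0)) (x (inord 1))).
Proof.
have e : forall i : 'I_2, x i = tup2 (x (inord 0)) (x (inord 1)) i.
  by case=> [[|[|//]] Hi]; rewrite /tup2 /=; congr x; apply/val_inj; rewrite /= inordK.
by congr f; apply: functional_extensionality.
Qed.

Lemma tup4_eta (m : nat) (g : operation A3 m) (a b c d : 'I_m -> A3) :
  (fun j => g (fun i => tup4 (a i) (b i) (c i) (d i) j)) = tup4 (g a) (g b) (g c) (g d).
Proof.
apply: functional_extensionality => -[[|[|[|[|//]]]] Hj] /=; rewrite /tup4 /=; done.
Qed.

Lemma part1 (m : nat) (g : operation A3 m) :
  commutes g T -> commutes f g.
Proof.
move=> gT x.
pose a := x (inord 0). pose b := x (inord 1).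
have ex : forall j : 'I_m, exists p : A3 * A3,
    [/\ T (tup4 p.1 (a j) (b j) p.2) = f (tup2 (a j) (b j)),
        T (tup4 (a j) (b j) (a j) (b j)) = T (tup4 p.1 (a j) p.2 (b j)) &
        T (tup4 (b j) (a j) (b j) (a j)) = T (tup4 p.1 (b j) p.2 (a j))].
  move=> j; have [x1 [x4 H]] := (part2 (a j) (b j) (f (tup2 (a j) (b j)))).1 erefl.
  by exists (x1, x4).
have [p Hp] := fin_all_exists ex.
have gE : forall (h : 'I_m -> A3) (h' : 'I_m -> A3), (forall j, h j = h' j) -> g h = g h'.
  by move=> h h' e; rewrite (functional_extensionality _ _ e).
have cT : forall a b c d : 'I_m -> A3,
    g (fun j => T (tup4 (a j) (b j) (c j) (d j))) = T (tup4 (g a) (g b) (g c) (g d)).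
  move=> a' b' c' d'.
  have := gT (fun i j => tup4 (a' i) (b' i) (c' i) (d' i) j).
  by rewrite tup4_eta.
rewrite fE.
have -> : (fun j => f (fun i => x i j)) = (fun j => f (tup2 (a j) (b j))).
  by apply: functional_extensionality => j; rewrite fE.
apply/part2.
exists (g (fun j => (p j).1)), (g (fun j => (p j).2)).
split.
- rewrite -cT; apply: gE => j; by case: (Hp j).
- rewrite -cT -cT; apply: gE => j; by case: (Hp j).
- rewrite -cT -cT; apply: gE => j; by case: (Hp j).
Qed.

Theorem lemma3p12 :
  bicentralizer (fun q : fop A3 => q = existT _ 4 T) (existT _ 2 f) /\
  (forall x2 x3 x5 : A3,
     f (tup2 x2 x3) = x5 <->
     exists x1 x4 : A3,
       [/\ T (tup4 x1 x2 x3 x4) = x5,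
           T (tup4 x2 x3 x2 x3) = T (tup4 x1 x2 x4 x3) &
           T (tup4 x3 x2 x3 x2) = T (tup4 x1 x3 x4 x2)]) /\
  (forall x2 x3 x5 : A3,
     f (tup2 x2 x3) = x5 <->
     exists x1 x4 u v : A3,
       [/\ T (tup4 x1 x2 x3 x4) = x5,
           T (tup4 x2 x3 x2 x3) = u, T (tup4 x1 x2 x4 x3) = u,
           T (tup4 x3 x2 x3 x2) = v & T (tup4 x1 x3 x4 x2) = v]).
Proof.
split; last split; first last.
- move=> x2 x3 x5; split.
    move=> /part2 [x1 [x4 [h1 h2 h3]]]; by exists x1, x4, (T (tup4 x2 x3 x2 x3)), (T (tup4 x3 x2 x3 x2)); split.
  move=> [x1 [x4 [u [v [h1 h2 h3 h4 h5]]]]]; apply/part2; exists x1, x4; split; congruence.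
- exact: part2.
split=> //= -[m g] [Hm Hg]; apply: part1; exact: (Hg _ erefl).
Qed.
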